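(* Let $N$ be a finite set and $\underline{N}\colon\mathrm{Aff}/\mathbb{Z}\to(\mathrm{Sets})$ the associated constant sheaf. For every ring $B$ the maps $\underline{N}(B)\to\underline{N}(B[[t]])\to\underline{N}(B((t)))$ are bijective. Equivalently, if $B((t))\simeq C_1\times\cdots\times C_l$ (resp. $B[[t]]\simeq C_1\times\cdots\times C_l$) then $B\simeq B_1\times\cdots\times B_l$ with $C_j=B_j((t))$ (resp. $C_j=B_j[[t]]$).
   Context: $B((t))=B[[t]][t^{-1}]$. The constant sheaf $\underline{N}$ assigns to $\mathrm{Spec}\,C$ the set of locally constant functions $\mathrm{Spec}\,C\to N$. *)

(* Defs.v *)
From HB Require Import structures.
From mathcomp Require Import all_boot all_algebra.
From Stdlib Require Import ClassicalEpsilon.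
Set Implicit Arguments. Unset Strict Implicit. Unset Printing Implicit Defensive.
Import GRing.Theory Num.Theory.
Local Open Scope ring_scope.

(** A commutative ring presented as a subset [rd_S] of an ambient type
    [rd_T] closed under the given operations (closure is not needed in
    the definitions below: all quantifications are restricted to [rd_S]). *)
Record ringdata := RD {
  rd_T : Type;
  rd_S : rd_T -> Prop;
  rd_0 : rd_T;
  rd_1 : rd_T;
  rd_add : rd_T -> rd_T -> rd_T;
  rd_mul : rd_T -> rd_T -> rd_T }.
Arguments rd_S : clear implicits.
Arguments rd_0 : clear implicits.
Arguments rd_1 : clear implicits.
Arguments rd_add : clear implicits.
Arguments rd_mul : clear implicits.

Definition is_prime (R : ringdata) (P : rd_T R -> Prop) : Prop :=
  (forall x, P x -> rd_S R x) /\
  P (rd_0 R) /\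
  (forall x y, P x -> P y -> P (rd_add R x y)) /\
  (forall a x, rd_S R a -> P x -> P (rd_mul R a x)) /\
  ~ P (rd_1 R) /\
  (forall a b, rd_S R a -> rd_S R b -> P (rd_mul R a b) -> P a \/ P b).

(** Locally constant functions Spec R -> N (only values at primes matter):
    every prime p has a basic open neighbourhood D(s) on which f is constant. *)
Definition locconst (N : Type) (R : ringdata) (f : (rd_T R -> Prop) -> N) :=
  forall p, is_prime p ->
    exists s, [/\ rd_S R s, ~ p s &
      forall q, is_prime q -> ~ q s -> f q = f p].

(** Pull back along a ring map h : R1 -> R2, via Spec R2 -> Spec R1, Q |-> h^-1 Q. *)
Definition preim (R1 R2 : ringdata) (h : rd_T R1 -> rd_T R2)
  (Q : rd_T R2 -> Prop) : rd_T R1 -> Prop := fun x => rd_S R1 x /\ Q (h x).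

Definition pullback (N : Type) (R1 R2 : ringdata) (h : rd_T R1 -> rd_T R2)
  (f : (rd_T R1 -> Prop) -> N) : (rd_T R2 -> Prop) -> N :=
  fun Q => f (preim h Q).

(** The induced map N(R1) -> N(R2) is well defined and bijective
    (elements of N(R) = locally constant functions, compared on primes). *)
Definition induced_bijective (N : Type) (R1 R2 : ringdata)
  (h : rd_T R1 -> rd_T R2) : Prop :=
  [/\ (forall f : (rd_T R1 -> Prop) -> N, locconst f -> locconst (pullback h f)),
      (forall f1 f2 : (rd_T R1 -> Prop) -> N, locconst f1 -> locconst f2 ->
         (forall Q, is_prime Q -> pullback h f1 Q = pullback h f2 Q) ->
         forall P, is_prime P -> f1 P = f2 P) &
      (forall g : (rd_T R2 -> Prop) -> N, locconst g ->
         exists f, locconst f /\ forall Q, is_prime Q -> g Q = pullback h f Q)].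

Section Rings.
Variable B : comPzRingType.

Definition ring_of : ringdata :=
  @RD B (fun _ => True) 0 1 +%R *%R.

Definition ps_mul (f g : nat -> B) : nat -> B :=
  fun n => \sum_(i < n.+1) f i * g (n - i)%N.
Definition ps_ring : ringdata :=
  @RD (nat -> B) (fun _ => True) (fun _ => 0) (fun n => (n == 0%N)%:R)
      (fun f g n => f n + g n) ps_mul.

Definition ls_bounded (f : int -> B) : Prop :=
  exists n : nat, forall k : int, (k < - (n%:Z))%R -> f k = 0.

Definition ls_bound (f : int -> B) : nat :=
  match excluded_middle_informative (ls_bounded f) with
  | left H => proj1_sig (constructive_indefinite_description _ H)
  | right _ => 0%N
  end.

(* (fg)(k) = sum_{i = -nf}^{k + ng} f(i) g(k - i) *)
Definition ls_mul (f g : int -> B) : int -> B :=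
  fun k =>
    let nf := ls_bound f in let ng := ls_bound g in
    if (0 <= k + nf%:Z + ng%:Z)%R then
      \sum_(j < (absz (k + nf%:Z + ng%:Z)%R).+1) f (j%:Z - nf%:Z)%R * g (k - j%:Z + nf%:Z)%R
    else 0.

Definition ls_ring : ringdata :=
  @RD (int -> B) ls_bounded (fun _ => 0) (fun k => (k == 0)%:R)
      (fun f g k => f k + g k) ls_mul.

Definition const_ps (b : B) : nat -> B := fun n => if n == 0%N then b else 0.
Definition ps_to_ls (f : nat -> B) : int -> B :=
  fun k => match k with Posz n => f n | Negz _ => 0 end.

End Rings.

(* Main.v *)
Require Import Defs.
From HB Require Import structures.
From mathcomp Require Import all_boot all_algebra.
From Stdlib Require Import ClassicalEpsilon.
From mathcomp Require Import boolp classical_sets.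
From mathcomp Require Import ring zify.
Set Implicit Arguments. Unset Strict Implicit. Unset Printing Implicit Defensive.
Import GRing.Theory.
Local Open Scope ring_scope.

Section Generic.
Variable R : comPzRingType.

Definition pr (P : R -> Prop) := @is_prime (ring_of R) P.

Lemma prE (P : R -> Prop) : pr P <->
  [/\ P 0, (forall x y, P x -> P y -> P (x + y)), (forall a x, P x -> P (a * x)),
      ~ P 1 & (forall a b, P (a * b) -> P a \/ P b)].
Proof.
rewrite /pr /is_prime /=; split.
  by case=> _ [? [? [Hm [? Hp]]]]; split=> // [a x|a b] H; [exact: Hm|exact: Hp].
case=> ? ? Hm ? Hp; split; first by []. split; first by []. split; first by [].
split; first by move=> a x _; exact: Hm. split; first by [].
by move=> a b _ _; exact: Hp.
Qed.

Definition ideal (I : R -> Prop) :=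
  [/\ I 0, (forall x y, I x -> I y -> I (x + y)) & (forall a x, I x -> I (a * x))].

Lemma exists_prime (I : R -> Prop) (a : R) : ideal I -> (forall n, ~ I (a ^+ n)) ->
  exists P, [/\ pr P, (forall x, I x -> P x) & ~ P a].
Proof.
case=> I0 ID IM Ia.
pose PP (A : set R) := [/\ (A = set0 \/ forall x, I x -> A x),
  (forall x y, A x -> A y -> A (x + y)), (forall r x, A x -> A (r * x))
  & forall n, ~ A (a ^+ n)].
have [A [[AI AD AM Aa] Amax]] : exists A, PP A /\ forall B, proper A B -> ~ PP B.
  apply: Zorn_bigcup => F FP Ftot.
  split.
  - have [[A0 [FA0 nA0]]|] := pselect (exists A, F A /\ A <> set0).
      right=> x Ix; exists A0 => //.
      by case: (FP _ FA0) => -[//|H] _ _ _; exact: H.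
    move=> nF; left; apply/seteqP; split=> x // [A FA Ax].
    have [A0|] := pselect (A = set0); first by rewrite A0 in Ax.
    by move=> An; case: nF; exists A.
  - move=> x y [A FA Ax] [B FB By].
    case: (Ftot _ _ FA FB) => [AB|BA].
      by exists B => //; case: (FP _ FB) => _ H _ _; apply: H => //; exact: AB.
    by exists A => //; case: (FP _ FA) => _ H _ _; apply: H => //; exact: BA.
  - by move=> r x [A FA Ax]; exists A => //; case: (FP _ FA) => _ _ H _; exact: H.
  - by move=> n [A FA Ax]; case: (FP _ FA) => _ _ _ H; exact: (H n).
have AneI : forall x, I x -> A x.
  case: AI => // A0.
  exfalso; apply: (Amax I); last by split=> //; right.
  rewrite A0; split=> // H; exact: (H 0 I0).
have A0 : A 0 by exact: AneI.
exists A; split; last by move=> Aa'; apply: (Aa 1%N); rewrite expr1.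
  apply/prE; split=> //.
    by move=> A1; apply: (Aa 0%N); rewrite expr0.
  move=> x y Axy; have [Ax|Ax] := pselect (A x); first by left.
  have [Ay|Ay] := pselect (A y); first by right. exfalso.
  pose Bx (z : R) := exists w r, A w /\ z = w + r * x.
  pose By (z : R) := exists w r, A w /\ z = w + r * y.
  have bigger (u : R) (Bu : set R) : Bu = (fun z => exists w r, A w /\ z = w + r * u) ->
      ~ A u -> exists n, Bu (a ^+ n).
    move=> -> Au; apply: contrapT => nB.
    apply: (Amax (fun z => exists w r, A w /\ z = w + r * u)).
      split; first by move=> z Az; exists z, 0; rewrite mul0r addr0.
      move=> H; apply: Au; apply: H; exists 0, 1; split=> //.
      by rewrite mul1r add0r.
    split.
    + by right=> z Iz; exists z, 0; rewrite mul0r addr0; split=> //; exact: AneI.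
    + move=> z1 z2 [w1 [r1 [Aw1 ->]]] [w2 [r2 [Aw2 ->]]].
      exists (w1 + w2), (r1 + r2); split; first exact: AD.
      by ring.
    + move=> r z [w [s [Aw ->]]]; exists (r * w), (r * s); split; first exact: AM.
      by rewrite mulrDr mulrA.
    + by move=> n Bn; apply: nB; exists n.
  have [i [w1 [r1 [Aw1 E1]]]] := bigger x Bx erefl Ax.
  have [j [w2 [r2 [Aw2 E2]]]] := bigger y By erefl Ay.
  apply: (Aa (i + j)%N); rewrite exprD E1 E2.
  have -> : (w1 + r1 * x) * (w2 + r2 * y) =
     w1 * (w2 + r2 * y) + (w2 * (r1 * x) + (r1 * r2) * (x * y)).
    by ring.
  apply: (AD); first by rewrite mulrC; exact: (AM).
  by apply: (AD); [rewrite mulrC; exact: (AM)|exact: (AM)].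
exact: AneI.
Qed.


Lemma nonnil_prime (a : R) : (forall n, a ^+ n <> 0) -> exists P, pr P /\ ~ P a.
Proof.
move=> Ha; have [|//|P [? _ ?]] := @exists_prime (fun x => x = 0) a.
  by split=> // [x y -> ->|b x ->]; rewrite ?addr0 ?mulr0.
by exists P.
Qed.

Lemma allprimes_nil (a : R) : (forall P, pr P -> P a) -> exists n, a ^+ n = 0.
Proof.
move=> H; apply: contrapT => Hn.
have [|P [PP Pa]] := nonnil_prime (a := a); last by apply: Pa; exact: H.
by move=> n an; apply: Hn; exists n.
Qed.

Lemma proper_prime (I : R -> Prop) : ideal I -> ~ I 1 ->
  exists P, pr P /\ forall x, I x -> P x.
Proof.
move=> II I1; have [n|P [? ? _]] := @exists_prime I 1 II; last by exists P.
by rewrite expr1n.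
Qed.

Lemma pr_exp (P : R -> Prop) x n : pr P -> P (x ^+ n) -> P x.
Proof.
move=> /prE[_ _ _ P1 Pp]; elim: n => [|n IH]; first by rewrite expr0.
by rewrite exprS => /Pp [//|]; exact: IH.
Qed.

Lemma pr_sum (P : R -> Prop) (I : Type) (l : seq I) (Q : pred I) (F : I -> R) :
  pr P -> (forall i, Q i -> P (F i)) -> P (\sum_(i <- l | Q i) F i).
Proof.
move=> /prE[P0 PD _ _ _] H; elim: l => [|i l IH]; first by rewrite big_nil.
rewrite big_cons; case: ifP => Qi //; exact: (PD) (H _ Qi) IH.
Qed.

Lemma idem_prime (P : R -> Prop) e : pr P -> e * e = e -> P e \/ P (1 - e).
Proof.
move=> /prE[P0 _ _ _ Pp] ee; apply: Pp.
by rewrite mulrBr mulr1 ee subrr.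
Qed.

Section Clopen.
Variables (N : Type) (g : (R -> Prop) -> N).
Hypothesis gloc : @locconst N (ring_of R) g.

Lemma clopen_idem (v : N) : exists e : R, e * e = e /\
  forall P, pr P -> (g P = v <-> ~ P e).
Proof.
pose gA (s : R) := forall q, pr q -> ~ q s -> g q = v.
pose gB (s : R) := forall q, pr q -> ~ q s -> g q <> v.
pose G (s : R) := gA s \/ gB s.
pose I (x : R) := exists l : seq (R * R), (forall p, p \in l -> G p.2) /\
   x = \sum_(p <- l) p.1 * p.2.
have II : ideal I.
  split.
  - by exists [::]; rewrite big_nil.
  - move=> x y [l1 [H1 ->]] [l2 [H2 ->]]; exists (l1 ++ l2); rewrite big_cat; split=> //.
    by move=> p; rewrite mem_cat => /orP[/H1|/H2].
  - move=> a x [l [H ->]]; exists (map (fun p => (a * p.1, p.2)) l); split.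
      by move=> p /mapP [q /H Gq ->].
    by rewrite big_map mulr_sumr; apply: eq_bigr => p _; rewrite mulrA.
have I1 : I 1.
  apply: contrapT => nI1; have [P [PP PI]] := proper_prime II nI1.
  have [s [_ Ps Hs]] := gloc PP.
  apply: Ps; apply: PI; exists [:: (1, s)]; rewrite big_seq1 mul1r; split=> //.
  move=> p; rewrite mem_seq1 => /eqP -> /=.
  have [gv|gv] := pselect (g P = v).
    by left=> q Pq qs; rewrite (Hs q Pq qs).
  by right=> q Pq qs; rewrite (Hs q Pq qs).
case: I1 => l [lG l1].
pose x := \sum_(p <- l | `[< gA p.2 >]) p.1 * p.2.
pose y := \sum_(p <- l | ~~ `[< gA p.2 >]) p.1 * p.2.
have xy1 : x + y = 1 by rewrite l1 [RHS](bigID (fun p => `[< gA p.2 >])).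
have xP P : pr P -> g P <> v -> P x.
  move=> PP gv; apply: pr_sum => // p /asboolP pA.
  case/prE: (PP) => _ _ PM _ _; apply: (PM); apply: contrapT => ps.
  by apply: gv; exact: (pA P PP ps).
have yP P : pr P -> g P = v -> P y.
  move=> PP gv; rewrite /y big_seq_cond; apply: pr_sum => // p /andP[pl /asboolPn pA].
  case/prE: (PP) => _ _ PM _ _; apply: (PM); apply: contrapT => ps.
  case: (lG p pl) => // pB.
  by apply: (pB P PP ps).
have [n xyn] : exists n, (x * y) ^+ n = 0.
  apply: allprimes_nil => P PP; apply: contrapT => nxy.
  have nx : ~ P x by move=> Px; apply: nxy; rewrite mulrC; case/prE: PP => _ _ PM _ _; exact: (PM).
  have ny : ~ P y by move=> Py; apply: nxy; case/prE: PP => _ _ PM _ _; exact: (PM).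
  have [gv|gv] := pselect (g P = v); first exact: ny (yP P PP gv).
  exact: nx (xP P PP gv).
pose X := x ^+ n.+1; pose Y := y ^+ n.+1.
have XY : X * Y = 0 by rewrite /X /Y -exprMn exprS xyn mulr0.
have [r [s rs1]] : exists r s, r * X + s * Y = 1.
  apply: contrapT => nrs.
  have [||P [PP PI]] := proper_prime (I := fun z => exists r s, z = r * X + s * Y).
  - split.
    + by exists 0, 0; rewrite !mul0r addr0.
    + move=> z1 z2 [r1 [s1 ->]] [r2 [s2 ->]]; exists (r1 + r2), (s1 + s2); ring.
    + move=> a z [r1 [s1 ->]]; exists (a * r1), (a * s1); ring.
  - by move=> [r [s E]]; apply: nrs; exists r, s.
  have PX : P X by apply: PI; exists 1, 0; ring.
  have PY : P Y by apply: PI; exists 0, 1; ring.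
  have Px := pr_exp PP PX; have Py := pr_exp PP PY.
  case/prE: PP => _ PD _ P1 _; apply: P1; rewrite -xy1; exact: (PD).
exists (r * X); split.
  have -> : r * X * (r * X) = r * X * (r * X + s * Y) - r * s * (X * Y) by ring.
  by rewrite rs1 XY mulr0 subr0 mulr1.
move=> P PP; split.
  move=> gv PrX.
  have PY : P (s * Y).
    case/prE: (PP) => _ _ PM _ _; apply: (PM); rewrite /Y exprSr; apply: (PM); exact: (yP P PP gv).
  case/prE: PP => _ PD _ P1 _; apply: P1; rewrite -rs1; exact: (PD).
move=> nPe; apply: contrapT => gv; apply: nPe.
case/prE: (PP) => _ _ PM _ _; apply: (PM); rewrite /X exprS mulrC; apply: (PM); exact: (xP P PP gv).
Qed.

End Clopen.

End Generic.

Section PS.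
Variable B : comPzRingType.

Definition PS := nat -> B.
HB.instance Definition _ := Choice.copy PS (nat -> B).

Definition ps0 : PS := fun _ => 0.
Definition psopp (f : PS) : PS := fun n => - f n.
Definition psadd (f g : PS) : PS := fun n => f n + g n.

Fact psaddA : associative psadd.
Proof. by move=> f g h; apply/funext => n; rewrite /psadd addrA. Qed.
Fact psaddC : commutative psadd.
Proof. by move=> f g; apply/funext => n; rewrite /psadd addrC. Qed.
Fact psadd0 : left_id ps0 psadd.
Proof. by move=> f; apply/funext => n; rewrite /psadd add0r. Qed.
Fact psaddN : left_inverse ps0 psopp psadd.
Proof. by move=> f; apply/funext => n; rewrite /psadd /psopp addNr. Qed.

HB.instance Definition _ := GRing.isZmodule.Build PS psaddA psaddC psadd0 psaddN.

Definition ps1 : PS := fun n => (n == 0%N)%:R.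

Lemma ps_mul_rev (f g : PS) i : ps_mul f g i = \sum_(j < i.+1) f (i - j)%N * g j.
Proof.
rewrite /ps_mul (reindex_inj rev_ord_inj) /=.
by apply: eq_bigr => j _; rewrite (sub_ordK j).
Qed.

Fact psmulA : associative (@ps_mul B).
Proof.
move=> p q r; apply/funext=> i; rewrite [LHS]/ps_mul [RHS]ps_mul_rev.
pose coef3 j k := p j * (q (i - j - k)%N * r k).
transitivity (\sum_(j < i.+1) \sum_(k < i.+1 | (k <= i - j)%N) coef3 j k).
  apply: eq_bigr => /= j _; rewrite ps_mul_rev big_distrr /=.
  by rewrite (big_ord_narrow_leq (leq_subr _ _)).
rewrite (exchange_big_dep predT) //=; apply: eq_bigr => k _.
transitivity (\sum_(j < i.+1 | (j <= i - k)%N) coef3 j k).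
  apply: eq_bigl => j; rewrite -ltnS -(ltnS j) -!subSn ?leq_ord //.
  by rewrite -subn_gt0 -(subn_gt0 j) -!subnDA addnC.
rewrite (big_ord_narrow_leq (leq_subr _ _)) /ps_mul big_distrl /=.
by apply: eq_bigr => j _; rewrite /coef3 -!subnDA addnC mulrA.
Qed.

Fact psmulC : commutative (@ps_mul B).
Proof.
move=> f g; apply/funext => i; rewrite ps_mul_rev /ps_mul.
by apply: eq_bigr => j _; rewrite mulrC.
Qed.

Fact psmul1 : left_id ps1 (@ps_mul B).
Proof.
move=> f; apply/funext => i; rewrite /ps_mul big_ord_recl subn0 /ps1 /= mul1r.
by rewrite big1 ?addr0 // => j _; rewrite /= mul0r.
Qed.

Fact psmulDl : left_distributive (@ps_mul B) psadd.
Proof.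
move=> f g h; apply/funext => i; rewrite /ps_mul /psadd -big_split /=.
by apply: eq_bigr => j _; rewrite mulrDl.
Qed.

HB.instance Definition _ := GRing.Zmodule_isComPzRing.Build PS psmulA psmulC psmul1 psmulDl.

Lemma psmulE (f g : PS) n : (f * g) n = ps_mul f g n. Proof. by []. Qed.
Lemma psaddE (f g : PS) n : (f + g) n = f n + g n. Proof. by []. Qed.
Lemma psoppE (f : PS) n : (- f) n = - f n. Proof. by []. Qed.
Lemma ps0E n : (0 : PS) n = 0. Proof. by []. Qed.
Lemma ps1E n : (1 : PS) n = (n == 0%N)%:R. Proof. by []. Qed.

Check (erefl : @is_prime (ps_ring B) = @is_prime (ring_of PS)).

End PS.

Section LSdef.
Variable B : comPzRingType.
Implicit Types (f g h : int -> B) (n m : nat).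

Definition valid f n := forall k : int, k < - n%:Z -> f k = 0.
Definition sh n f : PS B := fun i => f (i%:Z - n%:Z).
Definition lsmulN n m f g : int -> B := fun k =>
  if 0 <= k + n%:Z + m%:Z then ps_mul (sh n f) (sh m g) (absz (k + n%:Z + m%:Z)) else 0.

Lemma ls_bound_valid f : ls_bounded f -> valid f (ls_bound f).
Proof.
move=> bf; rewrite /ls_bound; case: excluded_middle_informative => // H.
exact: (proj2_sig (ClassicalEpsilon.constructive_indefinite_description _ H)).
Qed.

Lemma valid_bounded f n : valid f n -> ls_bounded f.
Proof. by move=> H; exists n. Qed.

Lemma valid_mono f n n' : valid f n -> (n <= n')%N -> valid f n'.
Proof. move=> H le k kn; apply: H; lia. Qed.

Lemma ls_mul_N f g : ls_mul f g = lsmulN (ls_bound f) (ls_bound g) f g.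
Proof.
apply/funext => k; rewrite /ls_mul /lsmulN /=.
set n := ls_bound f; set m := ls_bound g.
case: ifP => // H; rewrite /ps_mul; apply: eq_bigr => j _; rewrite /sh.
congr (_ * g _).
have := ltn_ord j; rewrite ltnS => jN.
have E : Posz (absz (k + n%:Z + m%:Z)) = k + n%:Z + m%:Z by rewrite gez0_abs.
move: E jN; set N := absz _; move=> E jN; lia.
Qed.

Definition shR (x : PS B) : PS B := fun i => if i is i'.+1 then x i' else 0.

Lemma ps_mul_shR0 (x y : PS B) : ps_mul (shR x) y 0 = 0.
Proof. by rewrite /ps_mul big_ord_recl big_ord0 /= mul0r addr0. Qed.

Lemma ps_mul_shRS (x y : PS B) N : ps_mul (shR x) y N.+1 = ps_mul x y N.
Proof.
rewrite /ps_mul big_ord_recl /= mul0r add0r; apply: eq_bigr => j _.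
by rewrite /bump /= add1n subSS.
Qed.

Lemma sh_succ f n : valid f n -> sh n.+1 f = shR (sh n f).
Proof.
move=> vf; apply/funext => -[|i] /=; rewrite /sh.
  by apply: vf; lia.
by congr f; lia.
Qed.

Lemma lsmulN_succl f g n m : valid f n -> lsmulN n.+1 m f g = lsmulN n m f g.
Proof.
move=> vf; apply/funext => k; rewrite /lsmulN sh_succ //.
case: ifP => H1; case: ifP => H2.
- have -> : absz (k + n.+1%:Z + m%:Z) = (absz (k + n%:Z + m%:Z)).+1 by lia.
  by rewrite ps_mul_shRS.
- have -> : absz (k + n.+1%:Z + m%:Z) = 0%N by lia.
  by rewrite ps_mul_shR0.
- lia.
- by [].
Qed.

Lemma lsmulNC f g n m : lsmulN n m f g = lsmulN m n g f.
Proof.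
apply/funext => k; rewrite /lsmulN.
have -> : k + n%:Z + m%:Z = k + m%:Z + n%:Z by ring.
by case: ifP => // _; rewrite -psmulE mulrC.
Qed.

Lemma lsmulN_addl f g n m a : valid f n -> lsmulN (n + a) m f g = lsmulN n m f g.
Proof.
move=> vf; elim: a => [|a IH]; first by rewrite addn0.
by rewrite addnS lsmulN_succl ?IH //; apply: (valid_mono vf); rewrite leq_addr.
Qed.

Lemma lsmulN_indep f g n m n' m' : valid f n -> valid f n' -> valid g m -> valid g m' ->
  lsmulN n m f g = lsmulN n' m' f g.
Proof.
move=> vf vf' vg vg'.
have E a b c d : valid f a -> valid g b -> lsmulN a b f g = lsmulN (a + c) (b + d) f g.
  move=> va vb.
  by rewrite [RHS]lsmulN_addl // [RHS]lsmulNC [RHS]lsmulN_addl // lsmulNC.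
by rewrite (E n m n' m') // (E n' m' n m) // addnC [(m' + m)%N]addnC.
Qed.



Lemma ls_mulE f g n m : ls_bounded f -> ls_bounded g -> valid f n -> valid g m ->
  ls_mul f g = lsmulN n m f g.
Proof.
move=> bf bg vf vg; rewrite ls_mul_N; apply: lsmulN_indep => //; exact: ls_bound_valid.
Qed.

Lemma lsmulN_valid f g n m : valid (lsmulN n m f g) (n + m).
Proof. move=> k kn; rewrite /lsmulN; case: ifP => // H; lia. Qed.

Lemma sh_lsmulN f g n m : sh (n + m) (lsmulN n m f g) = ps_mul (sh n f) (sh m g).
Proof.
apply/funext => i.
have E : i%:Z - (n + m)%N%:Z + n%:Z + m%:Z = i%:Z by lia.
by rewrite {1}/sh /lsmulN E.
Qed.

Lemma sh_add f g n : sh n (fun k => f k + g k) = sh n f + sh n g.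
Proof. by []. Qed.

End LSdef.

Section LSring.
Variable B : comPzRingType.

Definition LS := {f : int -> B | ls_bounded f}.
HB.instance Definition _ := gen_eqMixin LS.
HB.instance Definition _ := gen_choiceMixin LS.
Definition lsv (x : LS) : int -> B := proj1_sig x.

Lemma LS_ext (x y : LS) : lsv x = lsv y -> x = y.
Proof.
case: x => f hf; case: y => g hg /= E; subst g; congr exist; exact: Prop_irrelevance.
Qed.

Lemma lsvP (x : LS) : ls_bounded (lsv x). Proof. exact: proj2_sig x. Qed.
Arguments lsvP x : clear implicits.
Lemma lsv_valid (x : LS) : valid (lsv x) (ls_bound (lsv x)).
Proof. exact: ls_bound_valid (lsvP x). Qed.
Arguments lsv_valid x : clear implicits.

Lemma b0 : ls_bounded (fun _ : int => (0 : B)). Proof. by exists 0%N. Qed.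
Lemma b1 : ls_bounded (fun k : int => ((k == 0)%:R : B)).
Proof. by exists 0%N => k kn; case: eqP => // E; subst k. Qed.
Lemma badd f g : ls_bounded f -> ls_bounded g -> ls_bounded (fun k : int => f k + g k : B).
Proof.
move=> [n Hn] [m Hm]; exists (maxn n m) => k kn.
rewrite Hn ?Hm ?addr0 //; lia.
Qed.
Lemma bopp f : ls_bounded f -> ls_bounded (fun k : int => - f k : B).
Proof. by move=> [n Hn]; exists n => k kn; rewrite Hn ?oppr0. Qed.
Lemma bmul f g : ls_bounded f -> ls_bounded (g : int -> B) -> ls_bounded (ls_mul f g).
Proof.
move=> bf bg; rewrite (ls_mulE bf bg (ls_bound_valid bf) (ls_bound_valid bg)).
exact: valid_bounded (@lsmulN_valid _ _ _ _ _).
Qed.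

Definition LS0 : LS := exist _ _ b0.
Definition LS1 : LS := exist _ _ b1.
Definition LSadd (x y : LS) : LS := exist _ _ (badd (lsvP x) (lsvP y)).
Definition LSopp (x : LS) : LS := exist _ _ (bopp (lsvP x)).
Definition LSmul (x y : LS) : LS := exist _ _ (bmul (lsvP x) (lsvP y)).

Fact LSaddA : associative LSadd.
Proof. by move=> x y z; apply: LS_ext; apply/funext => k /=; rewrite addrA. Qed.
Fact LSaddC : commutative LSadd.
Proof. by move=> x y; apply: LS_ext; apply/funext => k /=; rewrite addrC. Qed.
Fact LSadd0 : left_id LS0 LSadd.
Proof. by move=> x; apply: LS_ext; apply/funext => k /=; rewrite add0r. Qed.
Fact LSaddN : left_inverse LS0 LSopp LSadd.
Proof. by move=> x; apply: LS_ext; apply/funext => k /=; rewrite addNr. Qed.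

HB.instance Definition _ := GRing.isZmodule.Build LS LSaddA LSaddC LSadd0 LSaddN.

Lemma lsmul_valid (x y : LS) n m : valid (lsv x) n -> valid (lsv y) m ->
  ls_mul (lsv x) (lsv y) = lsmulN n m (lsv x) (lsv y).
Proof. by move=> vx vy; apply: ls_mulE => //; exact: lsvP. Qed.

Fact LSmulA : associative LSmul.
Proof.
move=> x y z; apply: LS_ext => /=.
have vx := lsv_valid x; have vy := lsv_valid y; have vz := lsv_valid z.
set nx := ls_bound (lsv x) in vx *; set ny := ls_bound (lsv y) in vy *.
set nz := ls_bound (lsv z) in vz *.
rewrite (ls_mulE (lsvP y) (lsvP z) vy vz) (ls_mulE (lsvP x) (lsvP y) vx vy).
rewrite (ls_mulE (lsvP x) (valid_bounded (@lsmulN_valid _ _ _ _ _)) vx (@lsmulN_valid _ _ _ _ _)).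
rewrite (ls_mulE (valid_bounded (@lsmulN_valid _ _ _ _ _)) (lsvP z) (@lsmulN_valid _ _ _ _ _) vz).
apply/funext => k; rewrite /lsmulN -/(lsmulN _ _ _ _) !sh_lsmulN.
rewrite !PoszD !addrA.
by case: ifP => // _; rewrite -!psmulE mulrA.
Qed.

Fact LSmulC : commutative LSmul.
Proof.
move=> x y; apply: LS_ext => /=.
by rewrite (ls_mulE (lsvP x) (lsvP y) (lsv_valid x) (lsv_valid y))
  (ls_mulE (lsvP y) (lsvP x) (lsv_valid y) (lsv_valid x)) lsmulNC.
Qed.

Fact LSmul1 : left_id LS1 LSmul.
Proof.
move=> x; apply: LS_ext => /=.
have vx := lsv_valid x; set n := ls_bound (lsv x) in vx *.
have v1 : valid (fun k : int => ((k == 0)%:R : B)) 0.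
  by move=> k kn; case: eqP => // E; subst k.
rewrite (ls_mulE b1 (lsvP x) v1 vx); apply/funext => k; rewrite /lsmulN.
have -> : sh 0 (fun k : int => ((k == 0)%:R : B)) = 1.
  by apply/funext => i; rewrite /sh /= subr0.
rewrite -psmulE mul1r; case: ifP => H.
  by rewrite /sh; congr (lsv x _); lia.
by rewrite vx //; lia.
Qed.

Fact LSmulDl : left_distributive LSmul LSadd.
Proof.
move=> x y z; apply: LS_ext => /=.
have vx := lsv_valid x; have vy := lsv_valid y; have vz := lsv_valid z.
set nx := ls_bound (lsv x) in vx *; set ny := ls_bound (lsv y) in vy *.
set nz := ls_bound (lsv z) in vz *.
have vx' := valid_mono vx (leq_maxl nx ny); have vy' := valid_mono vy (leq_maxr nx ny).
have vxy : valid (fun k => lsv x k + lsv y k) (maxn nx ny).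
  by move=> k kn; rewrite vx' // vy' // addr0.
rewrite (ls_mulE (badd (lsvP x) (lsvP y)) (lsvP z) vxy vz).
rewrite (ls_mulE (lsvP x) (lsvP z) vx' vz) (ls_mulE (lsvP y) (lsvP z) vy' vz).
apply/funext => k; rewrite /lsmulN sh_add; case: ifP => _; last by rewrite addr0.
by rewrite -!psmulE mulrDl.
Qed.

HB.instance Definition _ := GRing.Zmodule_isComPzRing.Build LS LSmulA LSmulC LSmul1 LSmulDl.

Lemma lsvM (x y : LS) : lsv (x * y) = ls_mul (lsv x) (lsv y). Proof. by []. Qed.
Lemma lsvD (x y : LS) k : lsv (x + y) k = lsv x k + lsv y k. Proof. by []. Qed.
Lemma lsvN (x : LS) k : lsv (- x) k = - lsv x k. Proof. by []. Qed.
Lemma lsv0 k : lsv (0 : LS) k = 0. Proof. by []. Qed.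
Lemma lsv1 k : lsv (1 : LS) k = (k == 0)%:R. Proof. by []. Qed.
Lemma lsvB (x y : LS) k : lsv (x - y) k = lsv x k - lsv y k. Proof. by []. Qed.

End LSring.
Arguments lsvP {B} x.
Arguments lsv_valid {B} x.

Section LSmore.
Variable B : comPzRingType.
Local Notation LS := (LS B).
Local Notation PS := (PS B).

Lemma valid_pts (x : PS) : valid (ps_to_ls x) 0.
Proof. by case=> // n; rewrite /= => H. Qed.
Arguments valid_pts x : clear implicits.

Definition iotaL (x : PS) : LS := exist _ _ (valid_bounded (valid_pts x)).

Lemma lsv_iota x : lsv (iotaL x) = ps_to_ls x. Proof. by []. Qed.

Lemma sh0_pts (x : PS) : sh 0 (ps_to_ls x) = x.
Proof. by apply/funext => i; rewrite /sh subr0. Qed.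

Lemma pts_mul (x y : PS) : ls_mul (ps_to_ls x) (ps_to_ls y) = ps_to_ls (ps_mul x y).
Proof.
rewrite (ls_mulE (valid_bounded (valid_pts x)) (valid_bounded (valid_pts y))
   (valid_pts x) (valid_pts y)).
apply/funext => k; rewrite /lsmulN !sh0_pts !addr0.
by case: k.
Qed.

Lemma iotaM x y : iotaL (x * y) = iotaL x * iotaL y.
Proof. by apply: LS_ext; rewrite lsvM !lsv_iota pts_mul. Qed.

Definition monf (b : B) (i : int) : int -> B := fun j => if j == i then b else 0.
Lemma valid_mon b i : valid (monf b i) (absz i).
Proof. by move=> k ki; rewrite /monf; case: eqP => // E; lia. Qed.
Arguments valid_mon b i : clear implicits.
Definition mon b i : LS := exist _ _ (valid_bounded (valid_mon b i)).
Lemma lsv_mon b i j : lsv (mon b i) j = if j == i then b else 0. Proof. by []. Qed.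

Definition psmon (b : B) (p : nat) : PS := fun q => if q == p then b else 0.

Lemma psmonM a b p q N : ps_mul (psmon a p) (psmon b q) N = if N == (p + q)%N then a * b else 0.
Proof.
rewrite /ps_mul /psmon.
case: (leqP p N) => pN.
  rewrite (bigD1 (Ordinal (pN : (p < N.+1)%N))) //= eqxx big1 ?addr0.
    case: eqP => E; case: eqP => E'; rewrite ?mulr0 //; lia.
  by move=> i /eqP ip; case: eqP => E; [case: ip; apply: val_inj|rewrite mul0r].
case: eqP => E; first lia.
by rewrite big1 // => i _; case: eqP => E'; rewrite ?mul0r //; have := ltn_ord i; lia.
Qed.

Lemma monM a b i j : mon a i * mon b j = mon (a * b) (i + j).
Proof.
apply: LS_ext; rewrite lsvM.
rewrite (ls_mulE (lsvP (mon a i)) (lsvP (mon b j)) (valid_mon a i) (valid_mon b j)).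
apply/funext => k; rewrite /lsmulN lsv_mon.
have Hi : 0 <= i + (absz i)%:Z by case: (i) => c /=; lia.
have Hj : 0 <= j + (absz j)%:Z by case: (j) => c /=; lia.
set n := absz i in Hi *; set m := absz j in Hj *.
have shm c l (nn : nat) : (0 <= l + nn%:Z) -> sh nn (monf c l) = psmon c (absz (l + nn%:Z)).
  move=> H; apply/funext => q; rewrite /sh /monf /psmon.
  have A : (absz (l + nn%:Z))%:Z = l + nn%:Z by rewrite gez0_abs.
  by case: eqP => E; case: eqP => E' //; lia.
rewrite /= !shm; try lia.
rewrite psmonM; case: ifP => H.
  have A1 : (absz (i + n%:Z))%:Z = i + n%:Z by rewrite gez0_abs //; lia.
  have A2 : (absz (j + m%:Z))%:Z = j + m%:Z by rewrite gez0_abs //; lia.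
  have A3 : (absz (k + n%:Z + m%:Z))%:Z = k + n%:Z + m%:Z by rewrite gez0_abs //; lia.
  by case: eqP => E; case: eqP => E' //; lia.
case: eqP => E //; have : ~~ (0 <= k + n%:Z + m%:Z) by rewrite H.
lia.
Qed.

Lemma monD a b i : mon (a + b) i = mon a i + mon b i.
Proof. by apply: LS_ext; apply/funext => k; rewrite lsvD !lsv_mon; case: eqP; rewrite ?addr0. Qed.

Lemma mon0 i : mon 0 i = 0.
Proof. by apply: LS_ext; apply/funext => k; rewrite lsv_mon lsv0; case: eqP. Qed.

Lemma mon1 : mon 1 0 = 1.
Proof. by apply: LS_ext; apply/funext => k; rewrite lsv_mon lsv1; case: eqP. Qed.

Lemma monX b i N : mon b i ^+ N = mon (b ^+ N) (i * N%:Z).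
Proof.
elim: N => [|N IH]; first by rewrite !expr0 mulr0 mon1.
by rewrite !exprS IH monM; congr mon; lia.
Qed.

Lemma iota_const b : iotaL (const_ps b) = mon b 0.
Proof.
apply: LS_ext; apply/funext => -[n|n] //=; rewrite /const_ps /monf //.
Qed.


Lemma pr_sub (R : comPzRingType) (P : R -> Prop) x y : pr P -> P x -> P y -> P (x - y).
Proof.
move=> /prE[_ PD PM _ _] Px Py; rewrite -mulN1r; apply: PD => //; exact: PM.
Qed.

Lemma ps_lead (p : B -> Prop) (x y : PS) j0 j1 : pr p ->
  (forall j, (j < j0)%N -> p (x j)) -> (forall j, (j < j1)%N -> p (y j)) ->
  p (ps_mul x y (j0 + j1)) -> p (x j0 * y j1).
Proof.
move=> pp Hx Hy.
have lt : (j0 < (j0 + j1).+1)%N by rewrite ltnS leq_addr.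
rewrite /ps_mul (bigD1 (Ordinal lt)) //= addKn => H.
have Hr : p (\sum_(i < (j0 + j1).+1 | i != Ordinal lt) x i * y (j0 + j1 - i)%N).
  apply: pr_sum => // i /eqP ni.
  case/prE: (pp) => _ _ PM _ _.
  have : (i : nat) <> j0 by move=> E; apply: ni; apply: val_inj.
  case: (ltngtP i j0) => // c _.
    by rewrite mulrC; apply: PM; exact: Hx.
  by apply: PM; apply: Hy; have := ltn_ord i; lia.
by have := pr_sub pp H Hr; rewrite addrK.
Qed.

Definition Pt (p : B -> Prop) (x : LS) := forall k, p (lsv x k).

Lemma lsmul_coef (x y : LS) n m k : valid (lsv x) n -> valid (lsv y) m ->
  lsv (x * y) k = if 0 <= k + n%:Z + m%:Z then
     ps_mul (sh n (lsv x)) (sh m (lsv y)) (absz (k + n%:Z + m%:Z)) else 0.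
Proof. by move=> vx vy; rewrite lsvM (ls_mulE (lsvP x) (lsvP y) vx vy). Qed.
Arguments lsmul_coef {x y n m} k _ _.

Lemma Pt_prime p : pr p -> pr (Pt p).
Proof.
move=> pp; have [p0 pD pM p1 pP] := iffLR (prE _) pp.
apply/prE; split.
- by move=> k; rewrite lsv0.
- by move=> x y Px Py k; rewrite lsvD; apply: pD.
- move=> a x Px k; rewrite (lsmul_coef k (lsv_valid a) (lsv_valid x)).
  case: ifP => // _; rewrite /ps_mul; apply: pr_sum => // i _.
  by apply: pM; apply: Px.
- by move=> H; apply: p1; have := H 0; rewrite lsv1.
move=> x y Pxy; apply: contrapT => /not_orP[hx hy].
have vx := lsv_valid x; have vy := lsv_valid y.
set nx := ls_bound (lsv x) in vx *; set ny := ls_bound (lsv y) in vy *.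
have exj (z : LS) nz : valid (lsv z) nz -> ~ Pt p z ->
    exists j0, ~ p (sh nz (lsv z) j0) /\ forall j, (j < j0)%N -> p (sh nz (lsv z) j).
  move=> vz nz'.
  have [k nk] : exists k, ~ p (lsv z k).
    by apply: contrapT => H; apply: nz' => k; apply: contrapT => nk; apply: H; exists k.
  have ex : exists j, `[< ~ p (sh nz (lsv z) j) >].
    have kn : 0 <= k + nz%:Z.
      apply: contrapT => H; apply: nk; rewrite vz ?p0 //; lia.
    exists (absz (k + nz%:Z)); apply/asboolP; rewrite /sh.
    have -> : (absz (k + nz%:Z))%:Z - nz%:Z = k by rewrite gez0_abs //; lia.
    exact: nk.
  case: (ex_minnP ex) => j0 /asboolP nj0 minj; exists j0; split => // j jl.
  apply: contrapT => nj; have := minj j (introT (asboolP _) nj); lia.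
have [j0 [nj0 Hj0]] := exj x nx vx hx.
have [j1 [nj1 Hj1]] := exj y ny vy hy.
have := Pxy ((j0 + j1)%N%:Z - nx%:Z - ny%:Z).
rewrite (lsmul_coef _ vx vy).
have -> : (j0 + j1)%N%:Z - nx%:Z - ny%:Z + nx%:Z + ny%:Z = (j0 + j1)%N%:Z by ring.
rewrite /= => H.
by case: (pP _ _ (ps_lead pp Hj0 Hj1 H)).
Qed.

Lemma Pt_mon p b i : pr p -> p b -> Pt p (mon b i).
Proof. by move=> /prE[p0 _ _ _ _] pb k; rewrite lsv_mon; case: eqP. Qed.

End LSmore.
Arguments valid_pts {B} x.
Arguments valid_mon {B} b i.
Arguments lsmul_coef {B x y n m} k _ _.

Section Ord.
Variable B : comPzRingType.
Local Notation LS := (LS B).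
Local Notation PS := (PS B).

Definition ordge (r : int) (x : LS) := forall k, k < r -> lsv x k = 0.

Lemma ordge_le r r' x : r' <= r -> ordge r x -> ordge r' x.
Proof. move=> le H k kr; apply: H; lia. Qed.

Lemma ordge0 r : ordge r 0. Proof. by []. Qed.

Lemma ordgeD r x y : ordge r x -> ordge r y -> ordge r (x + y).
Proof. by move=> Hx Hy k kr; rewrite lsvD Hx ?Hy ?addr0. Qed.

Lemma ordge_sum r (I : Type) (l : seq I) (P : pred I) (F : I -> LS) :
  (forall i, P i -> ordge r (F i)) -> ordge r (\sum_(i <- l | P i) F i).
Proof.
move=> H; elim: l => [|i l IH]; first by rewrite big_nil.
by rewrite big_cons; case: ifP => Pi //; apply: ordgeD => //; exact: H.
Qed.

Lemma ordge_natmul r x N : ordge r x -> ordge r (x *+ N).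
Proof.
move=> H; elim: N => [|N IH]; first by rewrite mulr0n.
by rewrite mulrS; apply: ordgeD.
Qed.

Lemma ps_mul_ord (X Y : PS) a b N : (forall j, (j < a)%N -> X j = 0) ->
  (forall j, (j < b)%N -> Y j = 0) -> (N < a + b)%N -> ps_mul X Y N = 0.
Proof.
move=> HX HY Nab; rewrite /ps_mul big1 // => i _.
case: (ltnP i a) => ia; first by rewrite HX ?mul0r.
by rewrite HY ?mulr0 //; have := ltn_ord i; lia.
Qed.

Lemma ordgeM a b x y : ordge a x -> ordge b y -> ordge (a + b) (x * y).
Proof.
move=> Hx Hy k kab.
pose n := (ls_bound (lsv x) + absz a)%N; pose m := (ls_bound (lsv y) + absz b)%N.
have vx : valid (lsv x) n by apply: (valid_mono (lsv_valid x)); rewrite leq_addr.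
have vy : valid (lsv y) m by apply: (valid_mono (lsv_valid y)); rewrite leq_addr.
have Ha : 0 <= a + n%:Z by rewrite /n; case: (a) => c /=; lia.
have Hb : 0 <= b + m%:Z by rewrite /m; case: (b) => c /=; lia.
rewrite (lsmul_coef k vx vy); case: ifP => // H.
apply: (@ps_mul_ord _ _ (absz (a + n%:Z)) (absz (b + m%:Z))).
- move=> j ja; rewrite /sh; apply: Hx.
  have : (j%:Z < a + n%:Z) by rewrite -[a + _]gez0_abs //; lia.
  lia.
- move=> j jb; rewrite /sh; apply: Hy.
  have : (j%:Z < b + m%:Z) by rewrite -[b + _]gez0_abs //; lia.
  lia.
- have A1 : (absz (a + n%:Z))%:Z = a + n%:Z by rewrite gez0_abs.
  have A2 : (absz (b + m%:Z))%:Z = b + m%:Z by rewrite gez0_abs.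
  have A3 : (absz (k + n%:Z + m%:Z))%:Z = k + n%:Z + m%:Z by rewrite gez0_abs //; lia.
  lia.
Qed.

Lemma ordge1 : ordge 0 (1 : LS).
Proof. by move=> k k0; rewrite lsv1; case: eqP => // E; subst k. Qed.

Lemma ordgeX a x i : ordge a x -> ordge (a * i%:Z) (x ^+ i).
Proof.
move=> H; elim: i => [|i IH]; first by rewrite expr0 mulr0; exact: ordge1.
rewrite exprS; apply: (ordge_le _ (ordgeM H IH)); lia.
Qed.

Lemma ordge_mon b i : ordge i (mon b i).
Proof. by move=> k ki; rewrite lsv_mon; case: eqP => // E; lia. Qed.

End Ord.

Section Idem.
Variable B : comPzRingType.
Local Notation LS := (LS B).
Local Notation PS := (PS B).

Lemma lsv_sum (I : Type) (l : seq I) (P : pred I) (F : I -> LS) k :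
  lsv (\sum_(i <- l | P i) F i) k = \sum_(i <- l | P i) lsv (F i) k.
Proof.
elim: l => [|i l IH]; first by rewrite !big_nil.
by rewrite !big_cons; case: ifP => // _; rewrite lsvD IH.
Qed.

Lemma nil_in_primes (R : comPzRingType) (x : R) N (P : R -> Prop) :
  x ^+ N = 0 -> pr P -> P x.
Proof. by move=> xN PP; apply: (pr_exp (n := N)) => //; rewrite xN; case/prE: PP. Qed.

Lemma idem_nil_zero (x : LS) : x * x = x -> (forall p, pr p -> Pt p x) -> x = 0.
Proof.
move=> xx Hx.
have vx := lsv_valid x; set n := ls_bound (lsv x) in vx.
have nilc k : exists N, lsv x k ^+ N = 0.
  by apply: allprimes_nil => p pp; exact: Hx.
pose nu := \sum_(j < n.+1) mon (lsv x (- (j : nat)%:Z)) (- (j : nat)%:Z).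
have [M nuM] : exists M, nu ^+ M = 0.
  apply: allprimes_nil => Q QQ; apply: pr_sum => // j _.
  have [N xN] := nilc (- (j : nat)%:Z).
  apply: (nil_in_primes (N := N)) => //.
  by rewrite monX xN mon0.
pose rho := x - nu.
have nuk k : lsv nu k = if (- n%:Z <= k) && (k <= 0) then lsv x k else 0.
  rewrite /nu lsv_sum /=.
  case: ifP => /andP H.
    have jlt : (absz k < n.+1)%N by lia.
    rewrite (bigD1 (Ordinal jlt)) //= /monf.
    have Ek : - (absz k)%:Z = k by lia.
    rewrite Ek eqxx big1 ?addr0 // => j /eqP nj; case: eqP => // E.
    by case: nj; apply: val_inj => /=; lia.
  rewrite big1 // => j _; rewrite /monf; case: eqP => // E.
  by case: H; have := ltn_ord j; lia.
have ordrho : ordge 1 rho.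
  move=> k k1; rewrite lsvB nuk; case: ifP => H; first by rewrite subrr.
  rewrite subr0 vx //; move/negbT: H; lia.
have ordnu : ordge (- n%:Z) nu.
  apply: ordge_sum => j _; apply: (@ordge_le _ (- (j : nat)%:Z)); last exact: ordge_mon.
  have := ltn_ord j; lia.
have xX m : x ^+ m.+1 = x.
  by elim: m => [|m IH]; rewrite ?expr1 // exprS IH.
have ordR (R : nat) : ordge R%:Z x.
  pose m := (n.+1 * M + R)%N.
  rewrite -(xX m) -[x](subrK nu) -/rho addrC exprDn.
  apply: ordge_sum => i _; apply: ordge_natmul.
  case: (leqP M (m.+1 - i)) => Hi.
    by rewrite -(subnK Hi) exprD nuM mulr0 mul0r; exact: ordge0.
  apply: (@ordge_le _ (- n%:Z * (m.+1 - i)%N%:Z + 1 * i%:Z)); last first.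
    by apply: ordgeM; apply: ordgeX.
  have := ltn_ord i; rewrite ltnS => il.
  have Hmul : (n * (m.+1 - i) <= n * M)%N by rewrite leq_mul2l ltnW ?orbT.
  have ti : ((m.+1 - i) + i = m.+1)%N by rewrite subnK.
  move: Hmul Hi ti; set t := (m.+1 - i)%N => Hmul Hi ti; clearbody t.
  have -> : - n%:Z * t%:Z + 1 * i%:Z = i%:Z - (n * t)%N%:Z by rewrite PoszM; ring.
  move: (n * t)%N Hmul => a Ha.
  move: (i : nat) ti => i0 ti.
  rewrite /m mulSn in ti; move: (n * M)%N ti Ha => b ti Ha; lia.
apply: LS_ext; apply/funext => k; rewrite lsv0.
apply: (ordR (absz k).+1); lia.
Qed.


Lemma monN (b : B) i : mon (- b) i = - mon b i.
Proof. by apply: LS_ext; apply/funext => k; rewrite lsvN !lsv_mon; case: eqP; rewrite ?oppr0. Qed.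

Lemma LS_idem_const (e : LS) : e * e = e -> exists eps : B, eps * eps = eps /\ e = mon eps 0.
Proof.
move=> ee.
have dich p : pr p -> Pt p e \/ Pt p (1 - e) by move=> pp; exact: idem_prime (Pt_prime pp) ee.
have excl p : pr p -> Pt p e -> ~ Pt p (1 - e).
  move=> pp Pe P1e; case/prE: (Pt_prime pp) => _ PD _ P1 _; apply: P1.
  by rewrite -(subrK e 1) addrC; apply: PD.
pose phi (p : B -> Prop) : bool := `[< Pt p e >].
have loc : @locconst bool (ring_of B) phi.
  move=> p pp; have [Pe|nPe] := pselect (Pt p e).
    have n1e := excl p pp Pe.
    have [k nk] : exists k, ~ p (lsv (1 - e) k).
      by apply: contrapT => H; apply: n1e => k; apply: contrapT => nk; apply: H; exists k.
    exists (lsv (1 - e) k); split => // q qq nq.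
    have Qe : Pt q e by case: (dich q qq) => // H; case: nq; exact: H.
    by rewrite /phi !asboolT.
  have [k nk] : exists k, ~ p (lsv e k).
    by apply: contrapT => H; apply: nPe => k; apply: contrapT => nk; apply: H; exists k.
  exists (lsv e k); split => // q qq nq.
  have nQe : ~ Pt q e by move=> H; apply: nq; exact: H.
  by rewrite /phi !asboolF.
have [eps [epse Heps]] := clopen_idem loc false.
pose c := mon eps 0.
have cc : c * c = c by rewrite /c monM epse addr0.
pose d := e - c.
have d3 : d * d * d = d.
  have : d * d * d - d = (e * e - e) * (e + 1 - 3%:R * c) + (c * c - c) * (3%:R * e - c - 1).
    by rewrite /d; ring.
  by rewrite ee cc !subrr !mul0r addr0 => /eqP; rewrite subr_eq0 => /eqP.
have Pd p : pr p -> Pt p d.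
  move=> pp; have [pe|npe] := pselect (p eps).
    have Pe : Pt p e.
      apply: contrapT => nPe; have : phi p = false by rewrite /phi asboolF.
      by move/(Heps p pp).
    by rewrite /d; apply: (pr_sub (P := Pt p)) => //; [exact: Pt_prime|exact: Pt_mon].
  have Pe : ~ Pt p e.
    by move=> Pe; have := (Heps p pp).2 npe; rewrite /phi asboolT.
  have P1e : Pt p (1 - e) by case: (dich p pp).
  have p1eps : p (1 - eps) by case: (idem_prime pp epse).
  have -> : d = mon (1 - eps) 0 - (1 - e) by rewrite monD monN mon1 /d /c; ring.
  by apply: (pr_sub (P := Pt p)) => //; [exact: Pt_prime|exact: Pt_mon].
have x0 : d * d = 0.
  apply: idem_nil_zero.
    have -> : d * d * (d * d) = d * d * d * d by ring.
    by rewrite d3.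
  move=> p pp; case/prE: (Pt_prime pp) => _ _ PM _ _; apply: PM; exact: Pd.
exists eps; split => //.
apply/eqP; rewrite -subr_eq0 -/c -/d; apply/eqP.
by rewrite -d3 x0 mul0r.
Qed.

End Idem.

Section RD.
Variables R1 R2 : ringdata.
Variable h : rd_T R1 -> rd_T R2.

Definition rhom :=
  [/\ rd_S R1 (rd_0 R1),
      (forall x y, rd_S R1 x -> rd_S R1 y -> rd_S R1 (rd_add R1 x y)),
      (forall x y, rd_S R1 x -> rd_S R1 y -> rd_S R1 (rd_mul R1 x y)),
      (forall x, rd_S R1 x -> rd_S R2 (h x)) &
   [/\ h (rd_0 R1) = rd_0 R2, h (rd_1 R1) = rd_1 R2,
      (forall x y, rd_S R1 x -> rd_S R1 y -> h (rd_add R1 x y) = rd_add R2 (h x) (h y)) &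
      (forall x y, rd_S R1 x -> rd_S R1 y -> h (rd_mul R1 x y) = rd_mul R2 (h x) (h y))]].

Hypothesis hh : rhom.

Lemma preim_prime Q : is_prime Q -> is_prime (Defs.preim h Q).
Proof.
case: hh => S0 SD SM Sh [h0 h1 hD hM].
case=> QS [Q0 [QD [QM [Q1 QP]]]]; rewrite /Defs.preim.
split; first by move=> x [].
split; first by rewrite h0.
split; first by move=> x y [Sx Qx] [Sy Qy]; split; [exact: SD|rewrite hD //; exact: QD].
split; first by move=> a x Sa [Sx Qx]; split; [exact: SM|rewrite hM //; apply: QM => //; exact: Sh].
split; first by move=> [_]; rewrite h1.
move=> a b Sa Sb [Sab]; rewrite hM // => Qab.
by case: (QP _ _ (Sh _ Sa) (Sh _ Sb) Qab) => H; [left|right].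
Qed.

Lemma pullback_loc (N : Type) (f : (rd_T R1 -> Prop) -> N) :
  locconst f -> locconst (pullback h f).
Proof.
move=> fl Q QQ; have PP := preim_prime QQ.
have [s [Ss ns Hs]] := fl _ PP.
case: hh => _ _ _ Sh _.
exists (h s); split; first exact: Sh.
  by move=> Qs; apply: ns.
move=> q qq nq; rewrite /pullback; apply: Hs; first exact: preim_prime.
by case.
Qed.

End RD.

Section Main.
Variable B : comPzRingType.
Local Notation LS := (LS B).
Local Notation PS := (PS B).

Lemma const_psM (a b : B) : const_ps (a * b) = ps_mul (const_ps a) (const_ps b).
Proof.
have E x : const_ps x = psmon x 0 by apply/funext => n; rewrite /const_ps /psmon.
by apply/funext => n; rewrite !E psmonM /psmon addn0.
Qed.

Lemma rhom_c : @rhom (ring_of B) (ps_ring B) (@const_ps B).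
Proof.
split=> //; split.
- by rewrite /=; apply/funext => n; rewrite /const_ps; case: eqP.
- by rewrite /=; apply/funext => n; rewrite /const_ps; case: eqP.
- by move=> x y _ _; rewrite /=; apply/funext => n; rewrite /const_ps /=; case: eqP; rewrite ?addr0.
- by move=> x y _ _; exact: const_psM.
Qed.

Definition ev0 (x : nat -> B) : B := x 0%N.

Lemma rhom_r : @rhom (ps_ring B) (ring_of B) ev0.
Proof.
split=> //; split=> //.
by move=> x y _ _; rewrite /ev0 /= /ps_mul big_ord_recl big_ord0 addr0.
Qed.

Lemma rhom_i : @rhom (ps_ring B) (ls_ring B) (@ps_to_ls B).
Proof.
split=> //.
- by move=> x _; exact: valid_bounded (valid_pts x).
split.
- by rewrite /=; apply/funext => -[].
- by rewrite /=; apply/funext => -[[|n]|n].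
- move=> x y _ _; have E : forall k, ps_to_ls (fun n => x n + y n) k = ps_to_ls x k + ps_to_ls y k by case=> n /=; rewrite ?addr0.
  exact: (funext E).
- by move=> x y _ _ /=; rewrite pts_mul.
Qed.

End Main.

Section Trans.
Variable B : comPzRingType.
Local Notation LS := (LS B).
Local Notation PS := (PS B).

Definition mk (f : int -> B) (H : ls_bounded f) : LS := exist _ f H.

Definition tr (P' : LS -> Prop) : (int -> B) -> Prop :=
  fun f => exists H : ls_bounded f, P' (exist _ f H).

Lemma tr_prime P' : pr P' -> @is_prime (ls_ring B) (tr P').
Proof.
case/prE=> P0 PD PM P1 PP.
split; first by move=> x [].
split; first by exists (@b0 B); exact: P0.
split.
  move=> x y [Hx Px] [Hy Py]; exists (badd Hx Hy).
  have -> : exist _ _ (badd Hx Hy) = mk Hx + mk Hy by apply: LS_ext.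
  exact: PD.
split.
  move=> a x Ha [Hx Px]; exists (bmul Ha Hx).
  have -> : exist _ _ (bmul Ha Hx) = mk Ha * mk Hx by apply: LS_ext.
  exact: PM.
split.
  move=> [H PH]; apply: P1.
  by have <- : exist _ _ H = 1 :> LS by apply: LS_ext.
move=> a b Ha Hb [H PH].
have E : exist _ _ H = mk Ha * mk Hb by apply: LS_ext.
rewrite E in PH; case: (PP _ _ PH) => [Pa|Pb]; [left; exists Ha|right; exists Hb] => //.
Qed.

Lemma prime_tr Q : @is_prime (ls_ring B) Q -> pr (fun x : LS => Q (lsv x)).
Proof.
case=> QS [Q0 [QD [QM [Q1 QP]]]]; apply/prE; split => //.
- by move=> x y; apply: QD.
- by move=> a x; apply: QM; exact: lsvP.
- by move=> a b /QP; case=> //; [exact: lsvP|exact: lsvP|left|right].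
Qed.

Lemma tr_back Q : @is_prime (ls_ring B) Q -> tr (fun x : LS => Q (lsv x)) = Q.
Proof.
case=> QS _; apply/funext => f; apply/propext; split; first by case.
by move=> Qf; exists (QS f Qf).
Qed.

Lemma loc_tr (N : Type) (g : ((int -> B) -> Prop) -> N) :
  @locconst N (ls_ring B) g -> @locconst N (ring_of LS) (fun P' => g (tr P')).
Proof.
move=> gl P' PP; have TP := tr_prime PP.
have [s [Ss ns Hs]] := gl _ TP.
exists (exist _ s Ss); split => //.
  by move=> Ps; apply: ns; exists Ss.
move=> q qq nq; apply: Hs; first exact: tr_prime.
move=> [H qs]; apply: nq.
by have <- : exist _ s H = exist _ s Ss :> LS by apply: LS_ext.
Qed.

Lemma iota_inj_const (e : PS) eps : iotaL e = mon eps 0 -> e = const_ps eps.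
Proof.
move=> E; apply/funext => n; have := congr1 (fun z => lsv z (Posz n)) E.
by rewrite lsv_iota lsv_mon /const_ps eqz_nat.
Qed.

Lemma L_PS (N : Type) (f : ((nat -> B) -> Prop) -> N) :
  @locconst N (ps_ring B) f -> forall P P', @is_prime (ps_ring B) P -> @is_prime (ps_ring B) P' ->
  (forall b, P (const_ps b) <-> P' (const_ps b)) -> f P = f P'.
Proof.
move=> fl P P' PP PP' HPP.
have [e [ee He]] := @clopen_idem PS N f fl (f P).
have ie : iotaL e * iotaL e = iotaL e by rewrite -iotaM ee.
have [eps [_ E]] := @LS_idem_const B (iotaL e) ie.
have Ec := iota_inj_const E.
have nPe : ~ P e by apply/(He P PP).
have nP'e : ~ P' e by rewrite Ec -HPP -Ec.
by symmetry; apply/(He P' PP').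
Qed.

Lemma lsv_mon_const (eps : B) : lsv (mon eps 0) = ps_to_ls (const_ps eps).
Proof. by apply/funext => -[n|n] //=; rewrite /monf /const_ps eqz_nat. Qed.

Lemma L_LS (N : Type) (g : ((int -> B) -> Prop) -> N) :
  @locconst N (ls_ring B) g -> forall Q Q', @is_prime (ls_ring B) Q -> @is_prime (ls_ring B) Q' ->
  (forall b, Q (ps_to_ls (const_ps b)) <-> Q' (ps_to_ls (const_ps b))) -> g Q = g Q'.
Proof.
move=> gl Q Q' QQ QQ' HQQ.
have gl' := loc_tr gl.
have [e [ee He]] := @clopen_idem LS N _ gl' (g Q).
have [eps [_ E]] := LS_idem_const ee.
have TQ := prime_tr QQ; have TQ' := prime_tr QQ'.
have nQe : ~ Q (lsv e).
  by apply/(He _ TQ); rewrite tr_back.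
have nQ'e : ~ Q' (lsv e) by rewrite E lsv_mon_const -HQQ -lsv_mon_const -E.
have := (He _ TQ').2 nQ'e; rewrite tr_back // => ->.
Qed.

End Trans.

Local Notation pc B := (@Defs.preim (ring_of B) (ps_ring B) (@const_ps B)).
Local Notation pe B := (@Defs.preim (ps_ring B) (ring_of B) (@ev0 B)).
Local Notation pi B := (@Defs.preim (ps_ring B) (ls_ring B) (@ps_to_ls B)).

Theorem lemma2p5 (N : finType) (B : comPzRingType) :
  @induced_bijective N (ring_of B) (ps_ring B) (@const_ps B) /\
  @induced_bijective N (ps_ring B) (ls_ring B) (@ps_to_ls B).
Proof.
have hc := rhom_c B; have hr := rhom_r B; have hi := rhom_i B.
split; split.
- move=> f; exact: pullback_loc.
- move=> f1 f2 l1 l2 H P PP.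
  have QQ := preim_prime hr PP.
  have E : pc B (pe B P) = P.
    by apply/funext => b; apply/propext; split; [case=> _ [_]|move=> Pb; split=> //; split].
  by have := H _ QQ; rewrite /pullback E.
- move=> g gl; exists (@pullback N (ps_ring B) (ring_of B) (@ev0 B) g).
  split; first exact: pullback_loc.
  move=> Q QQ; rewrite /pullback.
  apply: L_PS => //; first by apply: preim_prime => //; exact: preim_prime.
  by move=> b; split; [move=> Qb; split=> //; split|case=> _ [_]].
- move=> f; exact: pullback_loc.
- move=> f1 f2 l1 l2 H P PP.
  have pp := preim_prime hc PP.
  have TQ := tr_prime (Pt_prime pp).
  have PQ := preim_prime hi TQ.
  have P0 : P (const_ps 0).
    have -> : const_ps 0 = (fun _ => 0 : B) by apply/funext => n; rewrite /const_ps; case: eqP.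
    by case: PP => _ [].
  have HP f : @locconst N (ps_ring B) f -> f P = f (pi B (tr (Pt (pc B P)))).
    move=> fl; apply: L_PS => // b; split.
      move=> Pb; split=> //; exists (valid_bounded (valid_pts _)) => k.
      split=> //; case: k => [[|n]|n] //=.
    by case=> _ [H0 Hk]; have [_] := Hk 0.
  by rewrite (HP _ l1) (HP _ l2); exact: H.
- move=> g gl.
  pose F (p : B -> Prop) := g (tr (Pt p)).
  have Floc : @locconst N (ring_of B) F.
    move=> p pp; have [s [Ss ns Hs]] := gl _ (tr_prime (Pt_prime pp)).
    have [k nk] : exists k, ~ p (s k).
      apply: contrapT => H; apply: ns; exists Ss => k; apply: contrapT => nk; apply: H.
      by exists k.
    exists (s k); split => // q qq nq; rewrite /F; apply: Hs; first exact: tr_prime (Pt_prime qq).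
    by case=> H1 H2; apply: nq; exact: (H2 k).
  exists (@pullback N (ring_of B) (ps_ring B) (@const_ps B) F).
  split; first exact: pullback_loc.
  move=> Q QQ; rewrite /pullback /F.
  have qq := preim_prime hc (preim_prime hi QQ).
  apply: L_LS => //; first exact: tr_prime (Pt_prime qq).
  have Q0 : Q (ps_to_ls (const_ps 0)).
    have -> : ps_to_ls (const_ps 0) = (fun _ => 0 : B).
      by apply/funext => -[n|n] //=; rewrite /const_ps; case: eqP.
    by case: QQ => _ [].
  move=> b; split.
    move=> Qb; exists (valid_bounded (valid_pts _)) => k.
    by split=> //; split=> //; case: k => [[|n]|n].
  by case=> H0 Hk; have [_ [_]] := Hk 0.
Qed.
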